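(* Let $\theta>1$, $r\in(\theta^{-1},\theta^{-1/2}]$ and $s=\max\big(1,\frac{\ln\theta}{\ln(r\theta)}-2\big)$. Let $(P_1,\dots,P_n)$ be a random price sequence with values in $[1,\theta]$ and maximum $P^*$, and suppose the prediction is deterministic, $Y=y$ almost surely for a fixed $y\in[1,\theta]$. Then \[ \frac{\mathbb{E}[\mathsf{A}^1_r(P,Y)]}{\mathbb{E}[P^*]}\ \ge\ \frac1{r\theta}\,\Upsilon(y),\qquad \Upsilon(y):=\frac{\mathbb{E}\big[P^*\,\mathcal{E}(P^*,y)^{s}\big]}{\mathbb{E}[P^*]}. \]
   Context: One-max search: fix $\theta>1$. Prices $p_1,\dots,p_n\in[1,\theta]$ are revealed one at a time; the algorithm receives at the start a prediction $y\in[1,\theta]$ of the maximum price. At each step it irrevocably accepts the current price (payoff = that price) or rejects it; if nothing is accepted the payoff is $1$. Let $\varphi_r(z)=\frac{r\theta-1}{1-r}+\frac{1-r^2\theta}{1-r}\cdot\frac{z}{r\theta}$ and $\Phi^1_r(z)=\max(r\theta,\varphi_r(z))$; $\mathsf{A}^1_r$ accepts the first price $p_i\ge\Phi^1_r(y)$, and $\mathsf{A}^1_r(P,Y)$ is its payoff on the realized prices and prediction. $\mathcal{E}(a,b)=\min\{a/b,b/a\}$. *)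

(* Defs.v *)
From HB Require Import structures.
From mathcomp Require Import all_boot all_order all_algebra.
From mathcomp Require Import all_classical all_reals all_analysis.
Set Implicit Arguments. Unset Strict Implicit. Unset Printing Implicit Defensive.
Import Order.TTheory GRing.Theory Num.Theory.
Local Open Scope ring_scope.

Definition varphi {R : realType} (theta r z : R) : R :=
  (r * theta - 1) / (1 - r) + (1 - r ^+ 2 * theta) / (1 - r) * (z / (r * theta)).

Definition Phi1 {R : realType} (theta r z : R) : R :=
  Num.max (r * theta) (varphi theta r z).

Definition A1 {R : realType} (theta r : R) (n : nat) (p : 'I_n -> R) (y : R) : R :=
  head 1 [seq p i | i <- enum 'I_n & Phi1 theta r y <= p i].

(* Maximum of the prices (they all lie in [1, theta], n >= 1). *)
Definition maxprice {R : realType} (n : nat) (p : 'I_n -> R) : R :=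
  \big[Num.max/1]_(i < n) p i.

Definition Eratio {R : realType} (a b : R) : R := Num.min (a / b) (b / a).

(* Main.v *)
Require Import Defs.
From HB Require Import structures.
From mathcomp Require Import all_boot all_order all_algebra.
From mathcomp Require Import all_classical all_reals all_analysis.
From mathcomp Require Import ring lra.
From mathcomp Require Import measurable_realfun.
Import Order.TTheory GRing.Theory Num.Theory.
Local Open Scope ring_scope.

Section Core.
Variable R : realType.
Variables (theta r y s : R).
Hypothesis th1 : 1 < theta.
Hypothesis u1 : 1 < r * theta.
Hypothesis r1 : r < 1.
Hypothesis ru1 : r * (r * theta) <= 1.
Hypothesis y1 : 1 <= y.
Hypothesis yth : y <= theta.
Hypothesis s1 : 1 <= s.
Hypothesis sth : theta <= powR (r * theta) (s + 2).

Let r0 : 0 < r.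
Proof. case: (ltrP 0 r) => // h; have := u1; have := th1; nra. Qed.
Let uth : r * theta < theta.
Proof. have := r1; have := th1; nra. Qed.
Let hr : r != 0. Proof. by rewrite gt_eqF. Qed.
Let h1r : 1 - r != 0. Proof. by rewrite subr_eq0 eq_sym lt_eqF. Qed.
Let hth : theta != 0. Proof. by rewrite gt_eqF // (lt_trans ltr01). Qed.
Let hy : y != 0. Proof. by rewrite gt_eqF // (lt_le_trans ltr01). Qed.
Let hu : r * theta != 0. Proof. by rewrite gt_eqF // (lt_trans ltr01). Qed.
Let hthu : theta - r * theta != 0. Proof. by rewrite subr_eq0 eq_sym lt_eqF. Qed.

Let phi_id : varphi theta r y - y = (y - r * theta) * (1 - r * theta) / (r * theta * (1 - r)).
Proof. by rewrite /varphi; field; rewrite ?hr ?h1r ?hth. Qed.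

Let phi_id2 : varphi theta r y - r * theta = (1 - r * (r * theta)) * (y - r * theta) / (r * theta * (1 - r)).
Proof. by rewrite /varphi; field; rewrite ?hr ?h1r ?hth. Qed.

Let phi_id3 : r * theta * varphi theta r y - y = (r * theta - 1) * (r * theta - r * y) / (1 - r).
Proof. by rewrite /varphi; field; rewrite ?hr ?h1r ?hth. Qed.

Let m := theta * (y - r * theta) / (y * (theta - r * theta)).

Let m_id1 : varphi theta r y / y = m * (r * theta)^-1 + (1 - m).
Proof. by rewrite /m /varphi; field; rewrite ?hr ?h1r ?hth ?hy ?hthu. Qed.

Let m_id2 : y * (m / theta + (1 - m) / (r * theta)) = 1.
Proof. by rewrite /m; field; rewrite ?hr ?h1r ?hth ?hy ?hthu. Qed.


Lemma pow_convex (p w m' : R) : 1 <= p -> 0 <= w -> 0 <= m' <= 1 ->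
  powR (m' * w + (1 - m')) p <= m' * powR w p + (1 - m').
Proof.
move=> p1 w0 /andP[m0 m1].
have mP : Itv.spec (@Itv.num_sem R) (Itv.Real `[0, 1]%Z) m'.
  by rewrite /= /Itv.num_sem /= in_itv /= m0 m1 andbT ger0_real.
pose t : {i01 R} := Itv.mk mP.
have := @convex_powR R p p1 t w 1.
rewrite !inE /= !in_itv /= w0 ler01 => /(_ erefl erefl).
rewrite !convRE /= powR1 mulr1.
move=> H; apply: le_trans H; rewrite le_eqVlt; apply/orP; left; apply/eqP; congr (_ `^ _).
symmetry; transitivity (m' * w + (1-m')*1); [reflexivity | by rewrite mulr1].
Qed.

Lemma pointwise (M A : R) : 1 <= M <= theta -> 1 <= A ->
  (Phi1 theta r y <= M -> Phi1 theta r y <= A) ->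
  M * powR (Eratio M y) s <= r * theta * A.
Proof.
move=> /andP[M1 Mth] A1 hA.
have M0 : 0 < M by apply: lt_le_trans M1.
have y0 : 0 < y by apply: lt_le_trans y1.
have u0 : 0 < r * theta by apply: lt_trans u1.
have E0 : 0 < Eratio M y by rewrite /Eratio lt_min !divr_gt0.
have E1 : Eratio M y <= 1.
  rewrite /Eratio ge_min; case: (leP M y) => h.
    by rewrite ler_pdivrMr // mul1r h.
  by rewrite orbC ler_pdivrMr // mul1r ltW.
have Es : powR (Eratio M y) s <= Eratio M y by apply: ge1r_powR => //; rewrite E0 E1.
have EyM : Eratio M y <= y / M by rewrite /Eratio ge_min lexx orbT.
have EMy : Eratio M y <= M / y by rewrite /Eratio ge_min lexx.
have ME : M * Eratio M y <= y.
  apply: (le_trans (ler_wpM2l (ltW M0) EyM)).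
  by rewrite mulrC divfK // gt_eqF.
case: (leP (Phi1 theta r y) M) => hc.
  have cA := hA hc.
  apply: (le_trans (ler_wpM2l (ltW M0) Es)).
  apply: (le_trans ME).
  have : y <= r * theta * varphi theta r y.
    rewrite -subr_ge0 phi_id3; apply: divr_ge0; last by rewrite subr_ge0 ltW.
    apply: mulr_ge0; first by rewrite subr_ge0 ltW.
    rewrite subr_ge0; apply: ler_wpM2l; [exact: ltW | exact: yth].
  move/le_trans; apply.
  apply: ler_wpM2l; first exact: ltW.
  apply: le_trans cA; by rewrite /Phi1 le_max lexx orbT.
have Es1 : powR (Eratio M y) s <= 1 by apply: le_trans E1.
case: (ltP M (r * theta)) => hMu.
  apply: (le_trans (ler_wpM2l (ltW M0) Es1)); rewrite mulr1.
  apply: (le_trans (ltW hMu)).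
  rewrite -[X in X <= _]mulr1; apply: ler_wpM2l => //; exact: ltW.
have hMp : M < varphi theta r y.
  move: hc; rewrite /Phi1 lt_max => /orP[h|//]; move: h; rewrite ltNge hMu //.
have e2 : ((varphi theta r y) - (r * theta)) * ((r * theta) * (1 - r)) = (1 - r * (r * theta)) * (y - (r * theta)).
  by rewrite phi_id2; field; rewrite ?hu ?h1r ?hr ?hth.
have hyu : (r * theta) < y.
  case: (ltP (r * theta) y) => // h.
  have pos : 0 < ((varphi theta r y) - (r * theta)) * ((r * theta) * (1 - r)).
    apply: mulr_gt0; first by rewrite subr_gt0; apply: le_lt_trans hMp.
    by apply: mulr_gt0 => //; rewrite subr_gt0.
  rewrite e2 in pos.
  have : 0 <= (1 - r * (r * theta)) * ((r * theta) - y).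
    by apply: mulr_ge0; rewrite subr_ge0.
  lra.
have e1 : ((varphi theta r y) - y) * ((r * theta) * (1 - r)) = (y - (r * theta)) * (1 - (r * theta)).
  by rewrite phi_id; field; rewrite ?hu ?h1r ?hr ?hth.
have hpy : (varphi theta r y) <= y.
  have D : 0 < (r * theta) * (1 - r) by apply: mulr_gt0 => //; rewrite subr_gt0.
  have : 0 <= (y - (r * theta)) * ((r * theta) - 1).
    by apply: mulr_ge0; rewrite subr_ge0 ltW.
  move=> h0.
  have h3 : ((varphi theta r y) - y) * ((r * theta) * (1 - r)) <= 0 by rewrite e1; lra.
  by move: h3; rewrite (pmulr_lle0 _ D) subr_le0.
have phi0 : 0 < (varphi theta r y) by apply: lt_trans M0 hMp.
have m0 : 0 <= m.
  have := uth; have := th1; have := hyu.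
  by rewrite /m => *; apply: divr_ge0; apply: mulr_ge0; lra.
have m1 : m <= 1.
  rewrite /m ler_pdivrMr; last by apply: mulr_gt0 => //; rewrite subr_gt0.
  by have := yth; have := u0; nra.
pose K := powR (r * theta) (s + 1).
have K0 : 0 < K by apply: powR_gt0.
have thK : theta <= K * (r * theta).
  apply: (le_trans sth).
  have -> : s + 2 = (s + 1) + 1 by ring.
  rewrite powRD; last by rewrite hu implybT.
  by rewrite powRr1 // ltW.
have Kinv : powR (r * theta)^-1 (s + 1) = K^-1.
  by rewrite -powR_inv1 ?(ltW u0) // -powRrM mulN1r powRN.
have KU : K^-1 <= (r * theta) / theta.
  rewrite -subr_ge0 (_ : (r * theta) / theta - K^-1 = (K * (r * theta) - theta) / (theta * K)); last first.
    by field; rewrite ?hth ?gt_eqF.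
  apply: divr_ge0; first by rewrite subr_ge0.
  apply: mulr_ge0; apply: ltW => //; exact: lt_trans th1.
apply: (@le_trans _ _ (M * powR (M / y) s)).
  apply: ler_wpM2l; first exact: ltW.
  apply: ge0_ler_powR => //; first by apply: le_trans s1.
    by rewrite nnegrE ltW.
  by rewrite nnegrE divr_ge0 // ltW.
apply: (@le_trans _ _ ((varphi theta r y) * powR ((varphi theta r y) / y) s)).
  apply: ler_pM; [exact: ltW | exact: powR_ge0 | exact: ltW |].
  apply: ge0_ler_powR => //; first by apply: le_trans s1.
    by rewrite nnegrE divr_ge0 // ltW.
    by rewrite nnegrE divr_ge0 // ltW.
  by apply: ler_pM => //; [exact: ltW | by rewrite invr_ge0 ltW | exact: ltW].
have -> : (varphi theta r y) * powR ((varphi theta r y) / y) s = y * powR ((varphi theta r y) / y) (s + 1).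
  have q0 : 0 < (varphi theta r y) / y by apply: divr_gt0.
  rewrite powRD; last by rewrite (gt_eqF q0) implybT.
  rewrite powRr1; last exact: ltW.
  by rewrite [RHS]mulrC -mulrA divfK ?gt_eqF // mulrC.
apply: (@le_trans _ _ (y * (m * K^-1 + (1 - m)))).
  apply: ler_wpM2l; first exact: ltW.
  rewrite m_id1 -Kinv; apply: pow_convex => //.
  - by rewrite lerDr; apply: le_trans s1.
  - by rewrite invr_ge0 ltW.
  - by rewrite m0 m1.
apply: (@le_trans _ _ (y * (m * ((r * theta) / theta) + (1 - m)))).
  apply: ler_wpM2l; first exact: ltW.
  by rewrite lerD2r; apply: ler_wpM2l.
have -> : y * (m * ((r * theta) / theta) + (1 - m)) = (r * theta) * (y * (m / theta + (1 - m) / (r * theta))).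
  by field; rewrite ?hth ?hu ?hr.
rewrite m_id2 mulr1 -[X in X <= _]mulr1; apply: ler_wpM2l => //; exact: ltW.
Qed.

End Core.
Section Integ.
Context d (T : measurableType d) (R : realType) (P : probability T R).
Let P1 : P setT = 1%E. Proof. exact: probability_setT. Qed.
Let intc (c : R) : (\int[P]_x (cst c%:E x) = c%:E)%E.
Proof.
rewrite integral_cst //.
by rewrite -[RHS](mule1 c%:E); congr (_ * _)%E; exact: P1.
Qed.

Lemma int_mono (f g : T -> R) : (forall x, 0 <= f x) -> (forall x, f x <= g x) ->
  (\int[P]_x (f x)%:E <= \int[P]_x (g x)%:E)%E.
Proof.
move=> f0 fg.
have g0 x : 0 <= g x by apply: le_trans (fg x).
rewrite !ge0_integralTE => [||x]; rewrite ?lee_fin //.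
apply: ge_ereal_sup => _ [h hf <-]; apply: ereal_sup_ubound; exists h => //= x.
by apply: le_trans (hf x) _; rewrite lee_fin.
Qed.

Lemma int_bnd (f : T -> R) (b : R) : (forall x, 0 <= f x <= b) ->
  (0 <= \int[P]_x (f x)%:E <= b%:E)%E.
Proof.
move=> fb; apply/andP; split.
  by apply: integral_ge0 => x _; rewrite lee_fin; case/andP: (fb x).
have -> : (b%:E = \int[P]_x (cst b%:E) x)%E.
  by rewrite intc.
apply: int_mono => x; by case/andP: (fb x).
Qed.

Lemma int_fin (f : T -> R) (b : R) : (forall x, 0 <= f x <= b) ->
  (\int[P]_x (f x)%:E)%E \is a fin_num.
Proof.
move=> /int_bnd /andP[h1 h2]; rewrite fin_numE.
apply/andP; split; apply/eqP => h; rewrite h in h1 h2 => //.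
Qed.

Lemma Rint_bnd (f : T -> R) (a b : R) : 0 <= a -> (forall x, a <= f x <= b) ->
  a <= Rintegral P setT f <= b.
Proof.
move=> a0 fb.
have fb' x : 0 <= f x <= b by case/andP: (fb x) => h1 h2; rewrite h2 andbT (le_trans a0).
have fin := @int_fin f b fb'.
rewrite /Rintegral; apply/andP; split.
  have -> : a = fine (\int[P]_x (cst a%:E x))%E by rewrite intc.
  apply: fine_le => //; first by rewrite intc.
  by apply: int_mono => // x; case/andP: (fb x).
have -> : b = fine (b%:E) by [].
apply: fine_le => //; by case/andP: (@int_bnd f b fb').
Qed.

Lemma Rint_mono (f g : T -> R) (b : R) : (forall x, 0 <= f x) -> (forall x, f x <= g x) ->
  (forall x, g x <= b) -> Rintegral P setT f <= Rintegral P setT g.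
Proof.
move=> f0 fg gb.
have g0 x : 0 <= g x by apply: le_trans (fg x).
rewrite /Rintegral; apply: fine_le.
- by apply: (@int_fin _ b) => x; rewrite f0 (le_trans (fg x)).
- by apply: (@int_fin _ b) => x; rewrite g0 gb.
- exact: int_mono.
Qed.

Lemma Rint_scale (f : T -> R) (k b : R) : measurable_fun setT f ->
  (forall x, 0 <= f x <= b) -> 0 <= k ->
  Rintegral P setT (fun x => k * f x) = k * Rintegral P setT f.
Proof.
move=> mf fb k0; rewrite /Rintegral.
under eq_integral do rewrite EFinM.
rewrite ge0_integralZl //.
- by rewrite fineM //; exact: int_fin fb.
- exact/measurable_EFinP.
- by move=> x _; rewrite lee_fin; case/andP: (fb x).
Qed.

End Integ.

Section Comb.
Variable R : realType.

Lemma maxprice_bnd n (p : 'I_n -> R) (b : R) : 1 <= b -> (forall i, 1 <= p i <= b) ->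
  1 <= maxprice p <= b.
Proof.
move=> b1 hp; rewrite /maxprice; apply/andP; split.
  apply: (big_ind (fun x => 1 <= x)) => //.
    by move=> x z hx _; rewrite le_max hx.
  by move=> i _; case/andP: (hp i).
apply: (big_ind (fun x => x <= b)) => //.
  by move=> x z hx hz; rewrite ge_max hx hz.
by move=> i _; case/andP: (hp i).
Qed.

Lemma maxprice_lt n (p : 'I_n -> R) (c : R) : 1 < c -> (forall i, p i < c) ->
  maxprice p < c.
Proof.
move=> c1 hp; rewrite /maxprice.
apply: (big_ind (fun x => x < c)) => //.
  by move=> x z hx hz; rewrite gt_max hx hz.
Qed.

Lemma A1_bnd (theta r : R) n (p : 'I_n -> R) (y : R) : 1 <= theta ->
  (forall i, 1 <= p i <= theta) -> 1 <= A1 theta r p y <= theta.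
Proof.
move=> th1 hp; rewrite /A1.
have : all (fun x => 1 <= x <= theta) [seq p i | i <- enum 'I_n & Phi1 theta r y <= p i].
  by apply/allP => x /mapP [i _ ->].
case: [seq p i | i <- enum 'I_n & Phi1 theta r y <= p i] => [|x l] /=.
  by rewrite lexx th1.
by case/andP.
Qed.

Lemma A1_ge (theta r : R) n (p : 'I_n -> R) (y : R) i :
  Phi1 theta r y <= p i -> Phi1 theta r y <= A1 theta r p y.
Proof.
move=> hi; rewrite /A1.
have hall : all (fun x => Phi1 theta r y <= x) [seq p i | i <- enum 'I_n & Phi1 theta r y <= p i].
  by apply/allP => x /mapP [j]; rewrite mem_filter => /andP[hj _] ->.
have : p i \in [seq p i | i <- enum 'I_n & Phi1 theta r y <= p i].
  by apply: map_f; rewrite mem_filter hi mem_enum.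
move: hall.
case: [seq p i | i <- enum 'I_n & Phi1 theta r y <= p i] => [|x l] //=.
by case/andP.
Qed.

End Comb.

Lemma meas_bigmax d (T : measurableType d) (R : realType) n (X : 'I_n -> T -> R) :
  (forall i, measurable_fun setT (X i)) ->
  forall s : seq 'I_n, measurable_fun setT (fun w => \big[Num.max/1]_(i <- s) X i w).
Proof.
move=> mX; elim => [|i s IH].
  under eq_fun do rewrite big_nil; exact: measurable_cst.
under eq_fun do rewrite big_cons.
exact: measurable_maxr.
Qed.

Theorem corollary2 (d : measure_display) (T : measurableType d) (R : realType)
    (P : probability T R) (n : nat) (X : 'I_n -> T -> R) (theta r y : R) :
  1 < theta ->
  theta^-1 < r -> r <= (Num.sqrt theta)^-1 ->
  (0 < n)%N ->
  (forall i, measurable_fun setT (X i)) ->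
  (forall i w, 1 <= X i w <= theta) ->
  1 <= y <= theta ->
  let s := Num.max 1 (ln theta / ln (r * theta) - 2) in
  let Pstar := fun w => maxprice (fun i => X i w) in
  let Upsilon := Rintegral P setT (fun w => Pstar w * powR (Eratio (Pstar w) y) s)
                 / Rintegral P setT Pstar in
  Rintegral P setT (fun w => A1 theta r (fun i => X i w) y) / Rintegral P setT Pstar
    >= (r * theta)^-1 * Upsilon.
Proof.
move=> th1 rth rsq n0 mX hX /andP[y1 yth].
pose s := Num.max 1 (ln theta / ln (r * theta) - 2).
pose Pstar := fun w => maxprice (fun i => X i w).
have th0 : 0 < theta by apply: lt_trans th1.
have u1 : 1 < r * theta.
  have e : theta^-1 * theta = 1 by rewrite mulVf // gt_eqF.
  have : 0 < (r - theta^-1) * theta by apply: mulr_gt0; rewrite ?subr_gt0.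
  lra.
have r0 : 0 < r by apply: lt_trans rth; rewrite invr_gt0.
have sq0 : 0 < Num.sqrt theta by rewrite sqrtr_gt0.
have sq2 : Num.sqrt theta ^+ 2 = theta by rewrite sqr_sqrtr // ltW.
have rsq1 : r * Num.sqrt theta <= 1.
  have e : (Num.sqrt theta)^-1 * Num.sqrt theta = 1 by rewrite mulVf // gt_eqF.
  have : 0 <= ((Num.sqrt theta)^-1 - r) * Num.sqrt theta by apply: mulr_ge0; rewrite ?subr_ge0 // ltW.
  lra.
have r1 : r < 1.
  have : 1 < Num.sqrt theta.
    case: (ltP 1 (Num.sqrt theta)) => // h.
    have : Num.sqrt theta ^+ 2 <= 1.
      by rewrite expr2; have := ltW sq0; nra.
    lra.
  nra.
have ru1 : r * (r * theta) <= 1.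
  rewrite -sq2 expr2.
  have : 0 <= r * Num.sqrt theta by apply: mulr_ge0; apply: ltW.
  nra.
have s1 : 1 <= s by rewrite /s le_max lexx.
have sth : theta <= powR (r * theta) (s + 2).
  have u0 : 0 < r * theta by apply: lt_trans u1.
  rewrite -ler_ln ?posrE ?powR_gt0 // ln_powR.
  have lu : 0 < ln (r * theta) by apply: ln_gt0.
  have : ln theta / ln (r * theta) - 2 <= s by rewrite /s le_max lexx orbT.
  rewrite lerBlDr => h.
  have := ler_wpM2r (ltW lu) h.
  by rewrite divfK // gt_eqF.
pose A := fun w => A1 theta r (fun i => X i w) y.
pose q := fun w => Pstar w * powR (Eratio (Pstar w) y) s.
have Pb w : 1 <= Pstar w <= theta by apply: maxprice_bnd => //; exact: ltW.
have Ab w : 1 <= A w <= theta by apply: A1_bnd => //; exact: ltW.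
have Eb w : 0 < Eratio (Pstar w) y <= 1.
  have [P1 _] := andP (Pb w).
  have P0 : 0 < Pstar w by apply: lt_le_trans P1.
  have y0 : 0 < y by apply: lt_le_trans y1.
  rewrite /Eratio lt_min !divr_gt0 //=.
  rewrite ge_min; case: (leP (Pstar w) y) => h.
    by rewrite ler_pdivrMr // mul1r h.
  by rewrite orbC ler_pdivrMr // mul1r ltW.
have qb w : 0 <= q w <= theta.
  have [P1 Pth] := andP (Pb w).
  have [E0 E1] := andP (Eb w).
  have Es : powR (Eratio (Pstar w) y) s <= 1.
    apply: le_trans E1; apply: ge1r_powR => //; by rewrite E0 E1.
  rewrite /q mulr_ge0 ?powR_ge0 //=; last by apply: le_trans P1.
  apply: le_trans Pth; rewrite -[X in _ <= X]mulr1; apply: ler_wpM2l => //.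
  by apply: le_trans P1.
have qA w : q w <= r * theta * A w.
  have [Ab1 _] := andP (Ab w).
  rewrite /q; apply: (@pointwise R theta r y s th1 u1 r1 ru1 y1 yth s1 sth _ _ (Pb w) Ab1).
  move=> hc.
  case: (boolP [exists i, Phi1 theta r y <= X i w]).
    by move=> /existsP[i hi]; exact: (@A1_ge R theta r n (fun i => X i w) y i hi).
  rewrite negb_exists => /forallP hall.
  have : Pstar w < Phi1 theta r y.
    apply: maxprice_lt.
      by apply: lt_le_trans u1 _; rewrite /Phi1 le_max lexx.
    by move=> i; rewrite ltNge; apply: hall.
  by rewrite ltNge hc.
have mP : measurable_fun setT Pstar.
  exact: (@meas_bigmax d T R n X mX (index_enum 'I_n)).
have mq : measurable_fun setT q.
  have -> : q = fun w => Pstar w * powR (Num.min (Pstar w * y^-1) (y * powR (Pstar w) (-1))) s.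
    apply: funext => w; rewrite /q /Eratio powR_inv1 //.
    by have [P1 _] := andP (Pb w); apply: le_trans P1.
  apply: measurable_funM => //.
  apply: (measurableT_comp (measurable_powR _)).
  apply: measurable_minr.
    by apply: measurable_funM => //; exact: measurable_cst.
  apply: measurable_funM; first exact: measurable_cst.
  exact: (measurableT_comp (measurable_powR _)).
change ((r * theta)^-1 * (Rintegral P setT q / Rintegral P setT Pstar) <= Rintegral P setT A / Rintegral P setT Pstar).
have Ip : 1 <= Rintegral P setT Pstar.
  by case/andP: (@Rint_bnd d T R P Pstar 1 theta ler01 Pb).
have u0 : 0 < r * theta by apply: lt_trans u1.
rewrite mulrA; apply: ler_wpM2r.
  by rewrite invr_ge0; apply: le_trans Ip.
rewrite -(@Rint_scale d T R P q (r * theta)^-1 theta mq qb); last by rewrite invr_ge0 ltW.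
apply: (@Rint_mono d T R P _ A theta).
- by move=> w; rewrite mulr_ge0 ?invr_ge0 ?(ltW u0) //; case/andP: (qb w).
- by move=> w; rewrite ler_pdivrMl //; exact: qA.
- by move=> w; case/andP: (Ab w).
Qed.
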